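(* Let $S\subseteq M_n$ and $T\subseteq M_{n'}$ be noncommutative graphs. If $S\leq T$ (there is a cohomomorphism from $S$ to $T$), then $\mathcal{H}(S)\leq\mathcal{H}(T)$.
   Context: All scalars are complex; $M_{n'\times n}$ denotes complex $n'\times n$ matrices and $M_n=M_{n\times n}$. A noncommutative graph is a linear subspace $S\subseteq M_n$ that contains $I_n$ and is closed under conjugate transpose. We write $S\leq T$ if there exist $m$ and matrices $E_1,\dots,E_m\in M_{n'\times n}$ with $\sum_{i=1}^m E_i^\dagger E_i=I_n$ (Choi-Kraus operators of a quantum channel $M_n\to M_{n'}$) such that $E_i^\dagger BE_j\in S$ for every $B\in T$ and all $i,j\in[m]$. For a subspace $S\subseteq M_n$, $M_m(S)$ denotes the set of $m\times m$ block matrices with every block in $S$, viewed in $M_{mn}$. The Haemers bound is $\mathcal{H}(S)=\min\{\mathrm{rk}(B):\ m\in\mathbb{N},\ B\in M_m(S),\ \sum_{i=1}^m B_{i,i}=I_n\}$. *)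

(* Defs.v *)
From HB Require Import structures.
From mathcomp Require Import all_boot all_order all_algebra.
From mathcomp Require Import complex.
From mathcomp Require Import boolp reals.
Set Implicit Arguments. Unset Strict Implicit. Unset Printing Implicit Defensive.
Import Order.TTheory GRing.Theory Num.Theory.
Local Open Scope ring_scope.

Definition adjmx {C : numClosedFieldType} {p q : nat} (A : 'M[C]_(p, q)) : 'M[C]_(q, p) :=
  (map_mx Num.conj A)^T.

Definition ncgraph {C : numClosedFieldType} {n : nat} (S : {vspace 'M[C]_n}) : Prop :=
  (1%:M \in S) /\ (forall A, A \in S -> adjmx A \in S).

Definition nc_le {C : numClosedFieldType} {n n' : nat}
    (S : {vspace 'M[C]_n}) (T : {vspace 'M[C]_n'}) : Prop :=
  exists (m : nat) (E : 'I_m -> 'M[C]_(n', n)),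
    \sum_(i < m) adjmx (E i) *m E i = 1%:M /\
    forall B, B \in T -> forall i j : 'I_m, adjmx (E i) *m B *m E j \in S.

Definition haemers_feasible {C : numClosedFieldType} {n : nat}
    (S : {vspace 'M[C]_n}) (k : nat) : Prop :=
  exists (m : nat) (Bl : 'I_m -> 'I_m -> 'M[C]_n),
    (forall i j, Bl i j \in S) /\
    \sum_(i < m) Bl i i = 1%:M /\
    \rank (\mxblock_(i < m, j < m) Bl i j) = k.

(* Haemers bound: the minimum of the feasible ranks (0 if there is none,
   which never happens for a noncommutative graph: take m = 1, B = I). *)
Definition haemers {C : numClosedFieldType} {n : nat} (S : {vspace 'M[C]_n}) : nat :=
  match pselect (exists k, haemers_feasible S k) with
  | left ex => ex_minn (P := fun k => `[< haemers_feasible S k >])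
                 (let: ex_intro k hk := ex in ex_intro _ k (asboolT hk))
  | right _ => 0%N
  end.

(* Main.v *)
Require Import Defs.
From HB Require Import structures.
From mathcomp Require Import all_boot all_order all_algebra.
From mathcomp Require Import complex.
From mathcomp Require Import boolp reals.
Import Order.TTheory GRing.Theory Num.Theory.
Local Open Scope ring_scope.
Local Open Scope complex_scope.

Section Aux.
Context {C : numClosedFieldType}.

Lemma sum_if (V : nmodType) m (i0 : 'I_m) (F : 'I_m -> V) :
  \sum_(b < m) (if i0 == b then F b else 0) = F i0.
Proof.
rewrite (bigD1 i0) //= eqxx big1 ?addr0 // => b /negbTE.
by rewrite eq_sym => ->.
Qed.


Lemma haemers_le n (S : {vspace 'M[C]_n}) k :
  haemers_feasible S k -> (haemers S <= k)%N.
Proof.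
move=> hk; rewrite /haemers; case: pselect => [ex|nex]; last by case: nex; exists k.
case: ex_minnP => j _; apply; exact/asboolP.
Qed.

Lemma haemers_feas n (S : {vspace 'M[C]_n}) :
  ncgraph S -> haemers_feasible S (haemers S).
Proof.
move=> [h1 _]; rewrite /haemers; case: pselect => [ex|nex].
  by case: ex_minnP => j /asboolP.
exfalso; apply: nex.
exists (\rank (\mxblock_(i < 1, j < 1) (1%:M : 'M[C]_n))), 1%N, (fun _ _ => 1%:M).
by split => //; rewrite big_ord1.
Qed.

Lemma feas_transfer n n' (S : {vspace 'M[C]_n}) (T : {vspace 'M[C]_n'}) k :
  nc_le S T -> haemers_feasible T k -> exists2 k', (k' <= k)%N & haemers_feasible S k'.
Proof.
move=> [m' [E [HE HET]]] [m [Bl [HB [Hsum <-]]]].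
pose Ty := ('I_m * 'I_m')%type.
pose K := #|{: Ty}|.
pose a (x : 'I_K) : 'I_m := (enum_val x).1.
pose p (x : 'I_K) : 'I_m' := (enum_val x).2.
pose Cl (x y : 'I_K) := adjmx (E (p x)) *m Bl (a x) (a y) *m E (p y).
pose P := \mxblock_(x < K, b < m) (if a x == b then adjmx (E (p x)) else 0 : 'M[C]_(n, n')).
pose Q := \mxblock_(b < m, l < K) (if a l == b then E (p l) else 0 : 'M[C]_(n', n)).
have eqC : \mxblock_(x < K, y < K) Cl x y = P *m \mxblock_(i < m, j < m) Bl i j *m Q.
  rewrite mul_mxblock mul_mxblock; apply/eq_mxblock => x y.
  under eq_bigr => c _.
    under eq_bigr => b _ do rewrite (_ : _ *m _ = if a x == b then adjmx (E (p x)) *m Bl b c else 0) ?(fun_if (mulmx^~ _)) ?mul0mx //.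
    rewrite sum_if (_ : _ *m _ = if a y == c then adjmx (E (p x)) *m Bl (a x) c *m E (p y) else 0) ?(fun_if (mulmx _)) ?mulmx0 //.
  over.
  by rewrite sum_if.
exists (\rank (\mxblock_(x < K, y < K) Cl x y)).
  by rewrite eqC (leq_trans (mxrankM_maxl _ _)) // mxrankM_maxr.
exists K, Cl; split; first by move=> x y; apply: HET; apply: HB.
rewrite /Cl /a /p -(big_enum_val (fun t : Ty => adjmx (E t.2) *m Bl t.1 t.1 *m E t.2)).
rewrite -(pair_bigA _ (fun i j => adjmx (E j) *m Bl i i *m E j)) /= exchange_big /=.
split=> //; rewrite -HE; apply: eq_bigr => j _.
by rewrite -mulmx_suml -mulmx_sumr Hsum mulmx1.
Qed.
End Aux.
Arguments feas_transfer {C n n' S T k}.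
Arguments haemers_feas {C n S}.
Arguments haemers_le {C n S k}.

Theorem mainTheorem7 (R : realType) (n n' : nat)
    (S : {vspace 'M[R[i]]_n}) (T : {vspace 'M[R[i]]_n'}) :
  ncgraph S -> ncgraph T -> nc_le S T -> (haemers S <= haemers T)%N.
Proof.
move=> _ hT hST.
have [k' hk' hS] := feas_transfer hST (haemers_feas hT).
exact: leq_trans (haemers_le hS) hk'.
Qed.
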